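(* Let $\lambda$ and $g$ be as in the context. Let $b^{(1)}\in[0,c^{(1)}]$ be the point with $g(b^{(1)})=0$ and set $b^{(2)}=b^{(1)}/\lambda$. Then $g(b^{(2)})=b^{(1)}$.
   Context: There is a unique constant $\lambda=2.5029\ldots$ and a unique infinitely (period-doubling) renormalizable analytic unimodal map $g:[-1,1]\to[-1,1]$ solving $g(x)=-\lambda\, g^{2}(-x/\lambda)$ for $-1\le x\le1$ ($g^2=g\circ g$). Unimodal means: $-1$ is the unique fixed point with positive multiplier, $g(1)=-1$, and $g$ has a unique maximum at an interior nondegenerate critical point $c^{(0)}$. Moreover $g$ is analytic near $[-1,1]$, even, concave on $[-c^{(1)},c^{(1)}]$ where $c^{(1)}=g(c^{(0)})$, satisfies $g(c^{(1)})=-c^{(1)}/\lambda$, $g'(c^{(1)})=-\lambda$, and has negative Schwarzian derivative. *)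

(* Defs.v *)
From Stdlib Require Import Reals Lra.
From Coquelicot Require Import Coquelicot.
Open Scope R_scope.

Definition analytic_near (f : R -> R) (a b : R) : Prop :=
  exists eps : R, 0 < eps /\
    forall x0 : R, a - eps < x0 < b + eps ->
      exists (r : R) (c : nat -> R), 0 < r /\
        forall x : R, Rabs (x - x0) < r ->
          ex_pseries c (x - x0) /\ f x = PSeries c (x - x0).

Definition schwarzian (f : R -> R) (x : R) : R :=
  Derive_n f 3 x / Derive f x - 3 / 2 * (Derive_n f 2 x / Derive f x) ^ 2.

Definition negative_schwarzian (f : R -> R) : Prop :=
  forall x : R, -1 <= x <= 1 -> Derive f x <> 0 -> schwarzian f x < 0.

Definition unimodal (f : R -> R) (c0 : R) : Prop :=
  (forall x, -1 <= x <= 1 -> -1 <= f x <= 1) /\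
  f (-1) = -1 /\ Derive f (-1) > 0 /\
  (forall x, -1 <= x <= 1 -> f x = x -> Derive f x > 0 -> x = -1) /\
  f 1 = -1 /\
  -1 < c0 < 1 /\
  (forall x, -1 <= x <= 1 -> x <> c0 -> f x < f c0) /\
  Derive f c0 = 0 /\ Derive_n f 2 c0 <> 0.

Definition concave_on (f : R -> R) (a b : R) : Prop :=
  forall x y t, a <= x <= b -> a <= y <= b -> 0 <= t <= 1 ->
    t * f x + (1 - t) * f y <= f (t * x + (1 - t) * y).

(* Main.v *)
Require Import Defs.
From Stdlib Require Import Reals Lra.
From Coquelicot Require Import Coquelicot.
Open Scope R_scope.

Theorem mainTheorem4 (lambda : R) (g : R -> R) (c0 : R) :
  2.5029 <= lambda < 2.5030 ->
  (forall x, -1 <= x <= 1 -> g x = - lambda * g (g (- x / lambda))) ->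
  unimodal g c0 ->
  analytic_near g (-1) 1 ->
  (forall x, -1 <= x <= 1 -> g (- x) = g x) ->
  concave_on g (- g c0) (g c0) ->
  g (g c0) = - g c0 / lambda ->
  Derive g (g c0) = - lambda ->
  negative_schwarzian g ->
  forall b1 : R, 0 <= b1 <= g c0 -> g b1 = 0 ->
    g (b1 / lambda) = b1.
Proof.
  intros Hl Hfe [Hrange [_ [_ [_ [H1 [Hc0 [Hmax _]]]]]]] _ Hev Hconc Hgc1 _ _ b1 Hb1 Hgb1.
  assert (Hc0r : -1 <= c0 <= 1) by lra.
  pose proof (Hrange c0 Hc0r) as Hc1r.
  assert (c00 : c0 = 0).
  { destruct (Req_dec c0 0) as [|Hn]; [assumption|].
    exfalso. assert (Hm : -1 <= - c0 <= 1) by lra.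
    assert (- c0 <> c0) by lra.
    pose proof (Hmax (- c0) Hm H). rewrite (Hev c0 Hc0r) in H0. lra. }
  subst c0.
  set (c1 := g 0) in *.
  assert (Hlpos : 0 < lambda) by lra.
  assert (Hgz : g (g (b1 / lambda)) = 0).
  { assert (Hm : -1 <= - b1 <= 1) by lra.
    pose proof (Hfe (- b1) Hm) as E.
    rewrite (Hev b1 ltac:(lra)) in E. rewrite Hgb1 in E.
    replace (- - b1 / lambda) with (b1 / lambda) in E by (field; lra).
    nra. }
  assert (Hb2 : 0 <= b1 / lambda <= b1).
  { split. apply Rdiv_le_0_compat; lra.
    apply (Rmult_le_reg_r lambda); [lra|]. field_simplify; nra. }
  set (b2 := b1 / lambda) in *.
  assert (Hz0 : 0 <= g b2).
  { pose proof (Hconc 0 b1 (1 - b2 / b1)).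
    destruct (Req_dec b1 0) as [E|Hn].
    - unfold b2 in *. rewrite E in *. replace (0/lambda) with 0 by (field; lra). lra.
    - assert (0 < b1) by lra.
      assert (b2 / b1 <= 1) by (apply (Rmult_le_reg_r b1); [lra|]; field_simplify; lra).
      assert (0 <= b2 / b1) by (apply Rdiv_le_0_compat; lra).
      replace ((1 - b2 / b1) * 0 + (1 - (1 - b2 / b1)) * b1) with b2 in H by (field; lra).
      rewrite Hgb1 in H.
      assert (0 <= g 0) by (unfold c1 in Hb1; lra).
      assert (0 <= (1 - b2 / b1) * g 0) by (apply Rmult_le_pos; lra).
      assert ((1 - b2 / b1) * g 0 + (1 - (1 - b2 / b1)) * 0 <= g b2) by (apply H; lra).
      lra. }
  assert (Hzm : g b2 <= c1).
  { destruct (Req_dec b2 0) as [E|Hn]. rewrite E. unfold c1; lra.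
    apply Rlt_le. apply Hmax; lra. }
  set (z := g b2) in *.
  assert (Huniq : forall u v, 0 <= u < v -> v <= c1 -> g v = 0 -> 0 < g u).
  { intros u v Hu Hv Hgv.
    assert (0 < c1) by lra.
    pose proof (Hconc 0 v (1 - u / v)) as Hc.
    replace ((1 - u / v) * 0 + (1 - (1 - u / v)) * v) with u in Hc by (field; lra).
    rewrite Hgv in Hc.
    assert (u / v < 1) by (apply (Rmult_lt_reg_r v); [lra|]; field_simplify; lra).
    assert (0 <= u / v) by (apply Rdiv_le_0_compat; lra).
    assert (0 < (1 - u / v) * g 0) by (apply Rmult_lt_0_compat; unfold c1 in *; lra).
    assert ((1 - u / v) * g 0 + (1 - (1 - u / v)) * 0 <= g u) by (apply Hc; unfold c1 in *; lra).
    lra. }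
  destruct (Rtotal_order z b1) as [Hlt|[Heq|Hgt]].
  - exfalso. pose proof (Huniq z b1 ltac:(lra) ltac:(lra) Hgb1). lra.
  - exact Heq.
  - exfalso. pose proof (Huniq b1 z ltac:(lra) ltac:(lra) Hgz). lra.
Qed.
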